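(* Let $M_T$ and $M_{T'}$ be two homomorphous MDPs with deterministic dynamics $T$ and $T'$, common reward $r$, and discount $\gamma\in(0,1)$. Assume $T'\in(T,\varepsilon_m)$, that $r$ is $\lambda_1$-Lipschitz in the action, and that both $T$ and $T'$ are $\lambda_2$-inverse Lipschitz in the action. Then for every $s\in\mathcal S$, $$\left|V^*_T(s)-V^*_{T'}(s)\right|\le\frac{\lambda_1\lambda_2\varepsilon_m}{1-\gamma}.$$
   Context: An MDP here has state space $\mathcal S\subseteq\mathbb R^n$ (with a norm $\|\cdot\|$), action space $\mathcal A$ with the $\ell_1$ norm $\|\cdot\|_1$, deterministic dynamics $T:\mathcal S\times\mathcal A\to\mathcal S$, bounded reward $r(s,a,s')$, initial state distribution $\rho_0$, and discount $\gamma\in(0,1)$. The optimal value function $V^*_T$ is the unique bounded solution of $V^*_T(s)=\max_a\left[r(s,a,T(s,a))+\gamma V^*_T(T(s,a))\right]$ (maxima assumed attained), with $Q^*_T(s,a)=r(s,a,T(s,a))+\gamma V^*_T(T(s,a))$ and $\pi^*_T(s)$ a maximizing action. Two MDPs are homomorphous if they share $\mathcal S,\mathcal A,r,\rho_0,\gamma$ and differ only in the dynamics, with the same sets of reachable next states: for every $s$, $\{T(s,a):a\in\mathcal A\}=\{T'(s,a):a\in\mathcal A\}$. $T'\in(T,\varepsilon_m)$ means $\|T(s,a)-T'(s,a)\|\le\varepsilon_m$ for all $(s,a)$. $r$ is $\lambda_1$-Lipschitz in the action: $|r(s,a_1,s')-r(s,a_2,s')|\le\lambda_1\|a_1-a_2\|_1$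 for all $s,s',a_1,a_2$. $T$ is $\lambda_2$-inverse Lipschitz in the action: $\|a_1-a_2\|_1\le\lambda_2\|T(s,a_1)-T(s,a_2)\|$ for all $s,a_1,a_2$. *)

(* Defs.v *)
From mathcomp Require Import all_boot all_order all_algebra.
From mathcomp Require Import reals.
Set Implicit Arguments. Unset Strict Implicit. Unset Printing Implicit Defensive.
Import Order.TTheory GRing.Theory Num.Theory.
Local Open Scope ring_scope.

Section MDP.
Variables (R : realType) (n k : nat).
Local Notation St := 'rV[R]_n.
Local Notation Ac := 'rV[R]_k.

Definition l1norm (a : Ac) : R := \sum_(i < k) `|a ord0 i|.

Record is_norm (N : St -> R) : Prop := IsNorm {
  norm_ge0 : forall x, 0 <= N x;
  norm_eq0 : forall x, N x = 0 -> x = 0;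
  normZ : forall (c : R) x, N (c *: x) = `|c| * N x;
  normD : forall x y, N (x + y) <= N x + N y }.

Definition is_dynamics (S : St -> Prop) (A : Ac -> Prop) (T : St -> Ac -> St) :=
  forall s a, S s -> A a -> S (T s a).

Definition reward_bounded (S : St -> Prop) (A : Ac -> Prop) (r : St -> Ac -> St -> R) :=
  exists B : R, forall s a s', S s -> A a -> S s' -> `|r s a s'| <= B.

Definition bounded_on (S : St -> Prop) (V : St -> R) :=
  exists B : R, forall s, S s -> `|V s| <= B.

Definition Qval (T : St -> Ac -> St) (r : St -> Ac -> St -> R) (gamma : R)
  (V : St -> R) (s : St) (a : Ac) : R :=
  r s a (T s a) + gamma * V (T s a).

(* V is a bounded solution of the Bellman optimality equation (max attained);
   by uniqueness this is V^*_T *)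
Definition is_optimal_value (S : St -> Prop) (A : Ac -> Prop) (T : St -> Ac -> St)
  (r : St -> Ac -> St -> R) (gamma : R) (V : St -> R) :=
  bounded_on S V /\
  forall s, S s ->
    (exists a, A a /\ V s = Qval T r gamma V s a) /\
    (forall a, A a -> Qval T r gamma V s a <= V s).

Definition homomorphous (S : St -> Prop) (A : Ac -> Prop) (T T' : St -> Ac -> St) :=
  forall s, S s -> forall x,
    (exists a, A a /\ T s a = x) <-> (exists a, A a /\ T' s a = x).

Definition dyn_close (N : St -> R) (S : St -> Prop) (A : Ac -> Prop)
  (T T' : St -> Ac -> St) (eps : R) :=
  forall s a, S s -> A a -> N (T s a - T' s a) <= eps.

Definition reward_lipschitz_action (S : St -> Prop) (A : Ac -> Prop)
  (r : St -> Ac -> St -> R) (l1 : R) :=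
  forall s s' a1 a2, S s -> S s' -> A a1 -> A a2 ->
    `|r s a1 s' - r s a2 s'| <= l1 * l1norm (a1 - a2).

Definition inverse_lipschitz_action (N : St -> R) (S : St -> Prop) (A : Ac -> Prop)
  (T : St -> Ac -> St) (l2 : R) :=
  forall s a1 a2, S s -> A a1 -> A a2 ->
    l1norm (a1 - a2) <= l2 * N (T s a1 - T s a2).

End MDP.

(* Main.v *)
Require Import Defs.
From mathcomp Require Import all_boot all_order all_algebra.
From mathcomp Require Import reals.
From mathcomp Require Import classical_sets lra.
Import Order.TTheory GRing.Theory Num.Theory.
Local Open Scope ring_scope.

Lemma one_side (R : realType) (n k : nat) (N : 'rV[R]_n -> R)
  (S : 'rV[R]_n -> Prop) (A : 'rV[R]_k -> Prop)
  (T T' : 'rV[R]_n -> 'rV[R]_k -> 'rV[R]_n)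
  (r : 'rV[R]_n -> 'rV[R]_k -> 'rV[R]_n -> R)
  (gamma eps l1 l2 D : R) (V V' : 'rV[R]_n -> R) :
  0 < gamma -> 0 <= l1 -> 0 <= l2 ->
  is_dynamics S A T ->
  (forall s, S s -> forall a, A a -> exists b, A b /\ T' s b = T s a) ->
  (forall s a, S s -> A a -> N (T' s a - T s a) <= eps) ->
  reward_lipschitz_action S A r l1 ->
  inverse_lipschitz_action N S A T' l2 ->
  is_optimal_value S A T r gamma V ->
  is_optimal_value S A T' r gamma V' ->
  (forall x, S x -> V x - V' x <= D) ->
  forall s, S s -> V s - V' s <= l1 * l2 * eps + gamma * D.
Proof.
move=> g0 l10 ll2 dT hom cl rl il [_ HV] [_ HV'] HD s Ss.
have [[a [Aa ->]] _] := HV s Ss.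
have [b [Ab Tb]] := hom s Ss a Aa.
have [_ H'] := HV' s Ss.
have := H' b Ab; rewrite /Qval Tb => Hb.
have Sx := dT s a Ss Aa.
have h1 : r s a (T s a) - r s b (T s a) <= l1 * l2 * eps.
  apply: le_trans (ler_norm _) _.
  apply: le_trans (rl s (T s a) a b Ss Sx Aa Ab) _.
  rewrite -mulrA; apply: ler_wpM2l => //.
  apply: le_trans (il s a b Ss Aa Ab) _.
  rewrite Tb.
  apply: ler_wpM2l => //; exact: cl.
have h2 : gamma * V (T s a) - gamma * V' (T s a) <= gamma * D.
  rewrite -mulrBr; apply: ler_wpM2l; [exact: ltW | exact: HD].
move: h1 h2 Hb; rewrite /Qval.
lra.
Qed.

Theorem mainTheorem1 (R : realType) (n k : nat) (N : 'rV[R]_n -> R)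
  (S : 'rV[R]_n -> Prop) (A : 'rV[R]_k -> Prop)
  (T T' : 'rV[R]_n -> 'rV[R]_k -> 'rV[R]_n)
  (r : 'rV[R]_n -> 'rV[R]_k -> 'rV[R]_n -> R)
  (gamma eps l1 l2 : R) (V V' : 'rV[R]_n -> R) :
  is_norm N ->
  0 < gamma -> gamma < 1 ->
  is_dynamics S A T -> is_dynamics S A T' ->
  reward_bounded S A r ->
  homomorphous S A T T' ->
  dyn_close N S A T T' eps ->
  0 <= l1 -> 0 <= l2 ->
  reward_lipschitz_action S A r l1 ->
  inverse_lipschitz_action N S A T l2 ->
  inverse_lipschitz_action N S A T' l2 ->
  is_optimal_value S A T r gamma V ->
  is_optimal_value S A T' r gamma V' ->
  forall s, S s -> `|V s - V' s| <= l1 * l2 * eps / (1 - gamma).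
Proof.
move=> nN g0 g1 dT dT' _ hom cl l10 l20 rl il il' oV oV' s Ss.
pose E : set R := fun x => exists t, S t /\ x = `|V t - V' t|.
have [[B1 HB1] _] := oV.
have [[B2 HB2] _] := oV'.
have ubE : has_ubound E.
  exists (B1 + B2) => x [t [St ->]].
  apply: le_trans (ler_normB _ _) _; apply: lerD; [exact: HB1|exact: HB2].
have neE : exists x, E x by exists `|V s - V' s|; exists s.
set D := sup E.
have HD : forall t, S t -> `|V t - V' t| <= D.
  by move=> t St; apply: ub_le_sup => //; exists t.
have h1 := @one_side R n k N S A T T' r gamma eps l1 l2 D V V' g0 l10 l20 dT
  (fun s Ss a Aa => proj1 (hom s Ss (T s a)) (ex_intro _ a (conj Aa erefl)))
  (fun s a Ss Aa => ltac:(rewrite -opprB -scaleN1r (normZ nN) normrN1 mul1r; exact: cl))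
  rl il' oV oV' (fun x Sx => le_trans (ler_norm _) (HD x Sx)).
have h2 := @one_side R n k N S A T' T r gamma eps l1 l2 D V' V g0 l10 l20 dT'
  (fun s Ss a Aa => proj2 (hom s Ss (T' s a)) (ex_intro _ a (conj Aa erefl)))
  cl rl il oV' oV (fun x Sx => ltac:(apply: le_trans (ler_norm _) _; rewrite distrC; exact: HD)).
have HDle : D <= l1 * l2 * eps + gamma * D.
  apply: ge_sup => // x [t [St ->]].
  rewrite ler_norml; apply/andP; split; last exact: h1.
  have := h2 t St; lra.
rewrite ler_pdivlMr; last lra.
have := HD s Ss.
have : 0 <= `|V s - V' s| by [].
nra.
Qed.
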